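(* Let $L$ be a shift and $\mu$ a $\sigma$-invariant, nonatomic, regular Borel probability measure on $L$ that is positive on nonempty cylinders. For each letter $a\in A$ let $I_{L,a}=\{x\in I:\phi^{-1}(\iota(x))\in Cyl_L(a)\}$, where $I=[0,1)$. Then $I=\bigsqcup_{a\in A}I_{L,a}$, and each nonempty $I_{L,a}$ is a right-open interval. Moreover $T_L$ is right-continuous on $I$ and increasing on each $I_{L,a}$.
   Context: $A$ is a finite totally ordered alphabet. $A^{\mathbb N}$ has the lexicographic order and the Cantor topology, and $\sigma$ deletes the first letter. A shift is a closed $L\subseteq A^{\mathbb N}$ with $\sigma(L)\subseteq L$, and $Cyl_L(v)=\{w\in L:v\text{ prefix of }w\}$. For $w\le w'$ in $L$, $[w,w']=\{w''\in L:w\le w''\le w'\}$, and $w_{L,min}=\min L$. Construction. Put $\phi_\mu(w)=\mu([w_{L,min},w])$. Let $Z_0$ be the set of $x\in[0,1]$ with $|\phi_\mu^{-1}(x)|\ge 2$; each such preimage consists of exactly two consecutive words. Let $\hat I=[0,1]\sqcup Z_0^-$, where $Z_0^-=\{z^-:z\in Z_0\}$ is a disjoint copy of $Z_0$. Order $\hat I$ so that $z^-<z$ with nothing in between, extending the order of $[0,1]$, and give it the order topology. Let $\iota$ be the inclusion $[0,1]\to\hat I$, and let $\kappa:\hat I\to[0,1]$ be the identity on $[0,1]$ with $z^-\mapsto z$. Define $\phi(w)=(\phi_\mu(w))^-$ if $\phi_\mu^{-1}(\phi_\mu(w))=\{w,w'\}$ with $w<w'$, and $\phi(w)=\phi_\mu(w)$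 otherwise. Set $\hat T=\phi\circ\sigma\circ\phi^{-1}$ and $T_L=\kappa\circ\hat T\circ\iota:[0,1]\to[0,1]$. *)

(* Defs.v *)
From HB Require Import structures.
From mathcomp Require Import all_boot all_order.
From Stdlib Require Import Reals ClassicalEpsilon.

Set Implicit Arguments.
Unset Strict Implicit.
Unset Printing Implicit Defensive.

Section ShiftDefs.

Variables (d : Order.disp_t) (A : finOrderType d).

Definition word := nat -> A.

Definition shift (w : word) : word := fun n => w n.+1.

Definition is_open (U : word -> Prop) : Prop :=
  forall w, U w -> exists n : nat,
    forall w' : word, (forall i, (i < n)%N -> w' i = w i) -> U w'.

Definition is_closed (F : word -> Prop) : Prop := is_open (fun w => ~ F w).

Inductive borel : (word -> Prop) -> Prop :=
| borel_open U : is_open U -> borel U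
| borel_compl U : borel U -> borel (fun w => ~ U w)
| borel_cunion (F : nat -> word -> Prop) :
    (forall n, borel (F n)) -> borel (fun w => exists n, F n w).

Definition is_shift (L : word -> Prop) : Prop :=
  is_closed L /\ forall w, L w -> L (shift w).

Definition lex_lt (w w' : word) : Prop :=
  exists n : nat, (forall i, (i < n)%N -> w i = w' i) /\ (w n < w' n)%O.
Definition lex_le (w w' : word) : Prop := w = w' \/ lex_lt w w'.

Definition Cyl (L : word -> Prop) (v : seq A) (w : word) : Prop :=
  L w /\ mkseq w (size v) = v.

Local Open Scope R_scope.

(* Borel probability measure on L, modelled as a Borel probability measure on
   A^N concentrated on L (mu (A^N \ L) = 0). *)
Definition is_prob_measure_on (L : word -> Prop) (mu : (word -> Prop) -> R) : Prop :=
  (forall B, borel B -> 0 <= mu B) /\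
  mu (fun _ => True) = 1 /\
  mu (fun w => ~ L w) = 0 /\
  (forall F : nat -> word -> Prop,
     (forall n, borel (F n)) ->
     (forall m n w, F m w -> F n w -> m = n) ->
     infinite_sum (fun n => mu (F n)) (mu (fun w => exists n, F n w))).

Definition sigma_invariant (mu : (word -> Prop) -> R) : Prop :=
  forall B, borel B -> mu (fun w => B (shift w)) = mu B.

Definition nonatomic (mu : (word -> Prop) -> R) : Prop :=
  forall w : word, mu (fun u => u = w) = 0.

(* regularity (outer regular by open sets, inner regular by compact = closed
   sets, A^N being compact) *)
Definition regular (mu : (word -> Prop) -> R) : Prop :=
  forall B, borel B -> forall eps, 0 < eps ->
    (exists U, is_open U /\ (forall w, B w -> U w) /\ mu U <= mu B + eps) /\
    (exists K, is_closed K /\ (forall w, K w -> B w) /\ mu B - eps <= mu K).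

Definition positive_on_cylinders (L : word -> Prop) (mu : (word -> Prop) -> R) : Prop :=
  forall v : seq A, (exists w, Cyl L v w) -> 0 < mu (Cyl L v).

(* phi_mu(w) = mu([w_{L,min}, w]);  [w_{L,min}, w] = {u in L : u <= w}
   since w_{L,min} = min L *)
Definition phi_mu (L : word -> Prop) (mu : (word -> Prop) -> R) (w : word) : R :=
  mu (fun u => L u /\ lex_le u w).

(* hat I = [0,1] \sqcup Z_0^- is represented inside R * bool :
   (x, false) is x in [0,1] (= iota x), (z, true) is z^-.  kappa = fst. *)
Definition hatI := (R * bool)%type.
Definition iota (x : R) : hatI := (x, false).
Definition kappa (y : hatI) : R := fst y.

Definition is_lower (L : word -> Prop) (mu : (word -> Prop) -> R) (w : word) : Prop :=
  exists w', L w' /\ lex_lt w w' /\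
    (forall u, (L u /\ phi_mu L mu u = phi_mu L mu w) <-> (u = w \/ u = w')).

Definition phi (L : word -> Prop) (mu : (word -> Prop) -> R) (w : word) : hatI :=
  (phi_mu L mu w, if excluded_middle_informative (is_lower L mu w) then true else false).

(* T_L = kappa o (phi o sigma o phi^{-1}) o iota, with phi^{-1}(iota x) the
   word w of L with phi w = iota x (chosen by Hilbert's epsilon). *)
Definition T_L (L : word -> Prop) (mu : (word -> Prop) -> R) (x : R) : R :=
  epsilon (inhabits 0%R) (fun y => exists w, L w /\ phi L mu w = iota x /\
                                           kappa (phi L mu (shift w)) = y).

Definition I_La (L : word -> Prop) (mu : (word -> Prop) -> R) (a : A) (x : R) : Prop :=
  0 <= x < 1 /\ exists w, L w /\ phi L mu w = iota x /\ Cyl L [:: a] w.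

End ShiftDefs.

(* Main.v *)
Require Import Defs.
From mathcomp Require Import all_boot all_order.
From mathcomp Require Import zify.
From Stdlib Require Import Reals Lra Classical FunctionalExtensionality PropExtensionality ClassicalEpsilon.
Import Order.TTheory.
Set Implicit Arguments.
Unset Strict Implicit.
Unset Printing Implicit Defensive.
Section Lex.
Variables (d : Order.disp_t) (A : finOrderType d).
Implicit Types u v w z : word A.

Definition agree n u v := forall i, (i < n)%N -> u i = v i.

Lemma agree_sym n u v : agree n u v -> agree n v u.
Proof. by move=> H i Hi; rewrite H. Qed.
Lemma agree_trans n u v w : agree n u v -> agree n v w -> agree n u w.
Proof. by move=> H1 H2 i Hi; rewrite H1 // H2. Qed.
Lemma agree_le m n u v : (m <= n)%N -> agree n u v -> agree m u v.
Proof. move=> Hmn H i Hi; apply: H; lia. Qed.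
Lemma agree_refl n u : agree n u u.
Proof. by []. Qed.

Lemma lex_irrefl u : ~ lex_lt u u.
Proof. by case=> n [_ H]; rewrite ltxx in H. Qed.

Lemma lex_trans u v w : lex_lt u v -> lex_lt v w -> lex_lt u w.
Proof.
case=> j [Hj1 Hj2] [k [Hk1 Hk2]].
case: (ltngtP j k) => Hjk.
- exists j; split.
  + move=> i Hi; rewrite Hj1 // Hk1 //; lia.
  + by rewrite -(Hk1 j Hjk).
- exists k; split.
  + move=> i Hi; rewrite Hj1 ?Hk1 //; lia.
  + by rewrite (Hj1 k Hjk).
- subst k; exists j; split.
  + by move=> i Hi; rewrite Hj1 // Hk1.
  + exact: lt_trans Hj2 Hk2.
Qed.

Lemma lex_asym u v : lex_lt u v -> ~ lex_lt v u.
Proof. by move=> H1 H2; apply: (@lex_irrefl u); apply: lex_trans H1 H2. Qed.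

Lemma ex_least (P : nat -> Prop) : (exists n, P n) -> exists n, P n /\ forall m, (m < n)%N -> ~ P m.
Proof.
case=> n Hn; elim: n {-2}n (leqnn n) Hn => [|N IH] n Hn Pn.
- exists n; split => // m Hm; lia.
- case: (classic (exists m, (m < n)%N /\ P m)) => [[m [Hm Pm]]|H].
  + apply: (IH m) => //; lia.
  + exists n; split => // m Hm Pm; apply: H; by exists m.
Qed.

Lemma lex_total u v : u <> v -> lex_lt u v \/ lex_lt v u.
Proof.
move=> Huv.
have : exists i, u i <> v i.
  apply: NNPP => H; apply: Huv; apply: functional_extensionality => i.
  apply: NNPP => Hi; apply: H; by exists i.
case/ex_least => j [Hj Hmin].
have Hag : forall i, (i < j)%N -> u i = v i by move=> i Hi; apply: NNPP; apply: Hmin.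
have Hne : u j != v j by apply/eqP.
case/orP: (lt_total Hne) => H.
- left; exists j; by split.
- right; exists j; split => // i Hi; by rewrite Hag.
Qed.

Lemma lex_le_refl u : lex_le u u. Proof. by left. Qed.
Lemma lex_lt_le u v : lex_lt u v -> lex_le u v. Proof. by right. Qed.
Lemma lex_le_trans u v w : lex_le u v -> lex_le v w -> lex_le u w.
Proof.
case=> [->|H1] // [<-|H2]; first by right.
right; exact: lex_trans H1 H2.
Qed.
Lemma lex_le_lt_trans u v w : lex_le u v -> lex_lt v w -> lex_lt u w.
Proof. case=> [->|H1] // H2; exact: lex_trans H1 H2. Qed.
Lemma lex_lt_le_trans u v w : lex_lt u v -> lex_le v w -> lex_lt u w.
Proof. move=> H1 [<-|H2] //; exact: lex_trans H1 H2. Qed.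
Lemma lex_nle u v : ~ lex_le u v -> lex_lt v u.
Proof.
move=> H; case: (classic (u = v)) => [E|E]; first by (exfalso; apply: H; left).
case: (lex_total E) => // H'; exfalso; apply: H; by right.
Qed.
Lemma lex_lt_nle u v : lex_lt u v -> ~ lex_le v u.
Proof. move=> H [E|H']; [subst; exact: lex_irrefl H | exact: lex_asym H H']. Qed.
Lemma lex_le_or u v : lex_le u v \/ lex_lt v u.
Proof. case: (classic (lex_le u v)) => H; [by left | right; exact: lex_nle]. Qed.
Lemma lex_le_antisym u v : lex_le u v -> lex_le v u -> u = v.
Proof. move=> [//|H] H'; exfalso; exact: lex_lt_nle H H'. Qed.

Lemma agree_all u v : (forall n, agree n u v) -> u = v.
Proof. move=> H; apply: functional_extensionality => i; apply: (H i.+1); lia. Qed.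

Lemma lex_convex n u v w : agree n u w -> lex_le u v -> lex_le v w -> agree n u v.
Proof.
move=> Huw [<-//|[j [Hj1 Hj2]]] Hvw.
case: (leqP n j) => Hnj; first exact: agree_le Hnj Hj1.
exfalso.
case: Hvw => [E|[k [Hk1 Hk2]]].
- subst w; move: Hj2; rewrite (Huw j Hnj) ltxx //.
- case: (ltngtP k j) => Hkj.
  + have E1 := Hj1 k Hkj. have E2 := Huw k (ltn_trans Hkj Hnj).
    move: Hk2; rewrite -E1 E2 ltxx //.
  + have E1 := Hk1 j Hkj. have E2 := Huw j Hnj.
    move: Hj2; rewrite E1 -E2 ltxx //.
  + subst k. have E2 := Huw j Hnj.
    have := lt_trans Hj2 Hk2; rewrite E2 ltxx //.
Qed.

Lemma lt_prefix n p q p' q' : lex_lt p q -> ~ agree n p q -> agree n p p' -> agree n q q' ->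
  lex_lt p' q' /\ ~ agree n p' q'.
Proof.
move=> [j [Hj1 Hj2]] Hna Hp Hq.
have Hjn : (j < n)%N.
  case: (leqP n j) => // Hnj; exfalso; apply: Hna; exact: agree_le Hnj Hj1.
split.
- exists j; split.
  + move=> i Hi; rewrite -Hp ?Hj1 ?Hq //; lia.
  + by rewrite -Hp // -Hq.
- move=> Ha; have := Ha j Hjn; rewrite -Hp // -Hq // => E.
  by move: Hj2; rewrite E ltxx.
Qed.

Lemma lex_lt0 u v : (u 0 < v 0)%O -> lex_lt u v.
Proof. move=> H; exists 0; split => // i; lia. Qed.

Lemma lex_le0 u v : lex_le u v -> (u 0 <= v 0)%O.
Proof.
case=> [<-//|[[|j] [Hj1 Hj2]]]; first exact: ltW.
by rewrite Hj1.
Qed.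

Lemma agree_shift n u v : agree n.+1 u v -> agree n (shift u) (shift v).
Proof. move=> H i Hi; apply: H; lia. Qed.

Lemma lex_lt_shift u v : u 0 = v 0 -> lex_lt u v -> lex_lt (shift u) (shift v).
Proof.
move=> E [[|j] [Hj1 Hj2]]; first by (move: Hj2; rewrite E ltxx).
exists j; split => //; move=> i Hi; apply: Hj1; lia.
Qed.

Lemma lex_le_shift u v : u 0 = v 0 -> lex_le u v -> lex_le (shift u) (shift v).
Proof. move=> E [<-|H]; [by left | right; exact: lex_lt_shift]. Qed.

Lemma ex_max_seq (P : A -> Prop) (s : seq A) : (exists b, b \in s /\ P b) ->
  exists b, b \in s /\ P b /\ forall c, c \in s -> P c -> (c <= b)%O.
Proof.
elim: s => [[b [//]]|x s IH] [b [Hb Pb]].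
case: (classic (exists b, b \in s /\ P b)) => [H|H].
- case: (IH H) => m [Hm [Pm Hmax]].
  case: (classic (P x)) => Px.
  + case: (leP x m) => Hxm.
    * exists m; split; first by rewrite inE Hm orbT.
      split => // c; rewrite inE => /orP [/eqP ->|Hc] Pc //; exact: Hmax.
    * exists x; split; first by rewrite inE eqxx.
      split => // c; rewrite inE => /orP [/eqP ->|Hc] Pc //.
      apply: le_trans (Hmax c Hc Pc) (ltW Hxm).
  + exists m; split; first by rewrite inE Hm orbT.
    split => // c; rewrite inE => /orP [/eqP ->|Hc] Pc //; exact: Hmax.
- exists x; move: Hb; rewrite inE => /orP [/eqP Ebx|Hb]; last by (exfalso; apply: H; exists b).
  subst b; split; first by rewrite inE eqxx.
  split => // c; rewrite inE => /orP [/eqP ->|Hc] Pc //.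
  exfalso; apply: H; by exists c.
Qed.

Lemma ex_min_seq (P : A -> Prop) (s : seq A) : (exists b, b \in s /\ P b) ->
  exists b, b \in s /\ P b /\ forall c, c \in s -> P c -> (b <= c)%O.
Proof.
elim: s => [[b [//]]|x s IH] [b [Hb Pb]].
case: (classic (exists b, b \in s /\ P b)) => [H|H].
- case: (IH H) => m [Hm [Pm Hmax]].
  case: (classic (P x)) => Px.
  + case: (leP m x) => Hxm.
    * exists m; split; first by rewrite inE Hm orbT.
      split => // c; rewrite inE => /orP [/eqP ->|Hc] Pc //; exact: Hmax.
    * exists x; split; first by rewrite inE eqxx.
      split => // c; rewrite inE => /orP [/eqP ->|Hc] Pc //.
      apply: le_trans (ltW Hxm) (Hmax c Hc Pc).
  + exists m; split; first by rewrite inE Hm orbT.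
    split => // c; rewrite inE => /orP [/eqP ->|Hc] Pc //; exact: Hmax.
- exists x; move: Hb; rewrite inE => /orP [/eqP Ebx|Hb]; last by (exfalso; apply: H; exists b).
  subst b; split; first by rewrite inE eqxx.
  split => // c; rewrite inE => /orP [/eqP ->|Hc] Pc //.
  exfalso; apply: H; by exists c.
Qed.

Lemma ex_max_letter (P : A -> Prop) : (exists b, P b) ->
  exists b, P b /\ forall c, P c -> (c <= b)%O.
Proof.
case=> b Pb; case: (@ex_max_seq P (enum A)); first by exists b; rewrite mem_enum.
move=> m [_ [Pm H]]; exists m; split => // c Pc; apply: H => //; by rewrite mem_enum.
Qed.
Lemma ex_min_letter (P : A -> Prop) : (exists b, P b) ->
  exists b, P b /\ forall c, P c -> (b <= c)%O.
Proof.
case=> b Pb; case: (@ex_min_seq P (enum A)); first by exists b; rewrite mem_enum.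
move=> m [_ [Pm H]]; exists m; split => // c Pc; apply: H => //; by rewrite mem_enum.
Qed.


Definition local n (S : word A -> Prop) := forall v v', agree n v v' -> S v -> S v'.

Lemma local_open n S : local n S -> is_open S.
Proof. move=> H w Sw; exists n => w' Hw'; apply: (H w) => //; exact: agree_sym. Qed.

Lemma local_closed n S : local n S -> is_closed S.
Proof.
move=> H; apply: (@local_open n) => v v' Hv Nv Sv'; apply: Nv; apply: (H v') => //; exact: agree_sym.
Qed.

Lemma closed_and (S1 S2 : word A -> Prop) : is_closed S1 -> is_closed S2 -> is_closed (fun w => S1 w /\ S2 w).
Proof.
move=> H1 H2 w Hw.
case: (classic (S1 w)) => Hs1.
- have Hs2 : ~ S2 w by move=> Hs2; apply: Hw.
  case: (H2 w Hs2) => n Hn; exists n => w' Hw' [_ ?]; exact: (Hn w' Hw').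
- case: (H1 w Hs1) => n Hn; exists n => w' Hw' [? _]; exact: (Hn w' Hw').
Qed.

Lemma open_gt w : is_open (fun v => lex_lt w v).
Proof.
move=> v [j [Hj1 Hj2]]; exists j.+1 => v' Hv'; exists j; split.
- move=> i Hi; rewrite Hj1 // Hv' //; lia.
- by rewrite Hv'.
Qed.

Lemma closed_le w : is_closed (fun v => lex_le v w).
Proof.
move=> v Hv; case: (open_gt (lex_nle Hv)) => n Hn; exists n => v' Hv'.
exact: lex_lt_nle (Hn v' Hv').
Qed.

Lemma closed_eq w : is_closed (fun v => v = w).
Proof.
move=> v Hv.
have [i Hi] : exists i, v i <> w i.
  apply: NNPP => H; apply: Hv; apply: functional_extensionality => i; apply: NNPP => Hi; apply: H; by exists i.
exists i.+1 => v' Hv' E; subst v'; apply: Hi; rewrite Hv' //.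
Qed.

Lemma greedy (Q : word A -> nat -> Prop) u0 : Q u0 0 ->
  (forall u n, Q u n -> exists u', agree n u u' /\ Q u' n.+1) ->
  (forall u u' n, agree n u u' -> Q u n -> Q u' n) ->
  exists w, forall n, Q w n.
Proof.
move=> H0 Hstep Hresp.
have Hs : forall n u, {u' | Q u n -> agree n u u' /\ Q u' n.+1}.
  move=> n u; apply: constructive_indefinite_description.
  case: (classic (Q u n)) => Hq.
  - case: (Hstep u n Hq) => u' Hu'; by exists u'.
  - by exists u.
pose s := fix s n := match n with 0 => u0 | S n => proj1_sig (Hs n (s n)) end.
have HQ : forall n, Q (s n) n.
  elim=> [//|n IH] /=; exact: (proj2 (proj2_sig (Hs n (s n)) IH)).
have Hag1 : forall n, agree n (s n) (s n.+1).
  move=> n /=; exact: (proj1 (proj2_sig (Hs n (s n)) (HQ n))).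
have Hag : forall n m, (n <= m)%N -> agree n (s n) (s m).
  move=> n; elim=> [|m IH] Hnm.
  - have -> : n = 0 by lia. done.
  - case: (ltngtP n m.+1) => Hc; [|lia|].
    + apply: agree_trans (IH _) _; first lia.
      apply: agree_le (Hag1 m); lia.
    + by rewrite Hc.
exists (fun i => s i.+1 i) => n; apply: (Hresp (s n)) => //.
move=> i Hi; exact: esym (Hag i.+1 n Hi i (ltnSn i)).
Qed.

Lemma ex_lex_min (C : word A -> Prop) : is_closed C -> (exists c, C c) ->
  exists m, C m /\ forall c, C c -> lex_le m c.
Proof.
move=> HC [c0 Hc0].
pose Q u n := (exists c, C c /\ agree n c u) /\
   forall j, (j < n)%N -> forall c, C c -> agree j c u -> (u j <= c j)%O.
case: (@greedy Q c0).
- split; first by exists c0.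
  move=> j; lia.
- move=> u n [[c [Cc Hc]] Hmin].
  case: (@ex_min_letter (fun b => exists c, C c /\ agree n c u /\ c n = b)).
    by exists (c n); exists c.
  move=> b [[c' [Cc' [Hc' Ec']]] Hb].
  exists c'; split; first exact: agree_sym.
  split; first by exists c'.
  move=> j Hj c1 Cc1 Hc1.
  case: (ltngtP j n) => Hjn; [|lia|].
  + rewrite (Hc' j Hjn); apply: Hmin => //.
    move=> i Hi; rewrite Hc1 // Hc' //; lia.
  + subst j; rewrite Ec'; apply: Hb; exists c1; split => //; split => //.
    move=> i Hi; rewrite Hc1 // Hc' //.
- move=> u u' n Hag [[c [Cc Hc]] Hmin]; split.
  + exists c; split => //; exact: agree_trans Hc Hag.
  + move=> j Hj c1 Cc1 Hc1; rewrite -(Hag j Hj); apply: Hmin => //.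
    apply: agree_trans Hc1 _; apply: agree_sym; apply: agree_le Hag; lia.
- move=> w Hw; exists w; split.
  + apply: NNPP => Nw; case: (HC w Nw) => n Hn.
    case: (proj1 (Hw n)) => c [Cc Hc]; apply: (Hn c) => //; exact: agree_sym.
  + move=> c Cc; case: (lex_le_or w c) => // [[j [Hj1 Hj2]]].
    exfalso; have := proj2 (Hw j.+1) j (ltnSn j) c Cc Hj1.
    by rewrite leNgt Hj2.
Qed.

End Lex.

Local Open Scope R_scope.
Section Meas.
Variables (d : Order.disp_t) (A : finOrderType d).
Variable mu : (word A -> Prop) -> R.
Variable L : word A -> Prop.
Hypothesis Hmu : is_prob_measure_on L mu.
Implicit Types u v w z : word A.
Implicit Types B S : word A -> Prop.

Lemma set_ext B1 B2 : (forall w, B1 w <-> B2 w) -> B1 = B2.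
Proof. move=> H; apply: functional_extensionality => w; apply: propositional_extensionality; exact: H. Qed.

Lemma mu_ext B1 B2 : (forall w, B1 w <-> B2 w) -> mu B1 = mu B2.
Proof. by move=> /set_ext ->. Qed.

Lemma borel_ext B1 B2 : borel B1 -> (forall w, B1 w <-> B2 w) -> borel B2.
Proof. by move=> H /set_ext <-. Qed.

Lemma borel_closed B : is_closed B -> borel B.
Proof.
move=> H; apply: (@borel_ext (fun w => ~ ~ B w)).
- apply: borel_compl; exact: borel_open.
- move=> w; split; [exact: NNPP | tauto].
Qed.

Lemma borel_local n B : local n B -> borel B.
Proof. move=> H; apply: borel_open; exact: local_open H. Qed.

Lemma borel_or B1 B2 : borel B1 -> borel B2 -> borel (fun w => B1 w \/ B2 w).
Proof.
move=> H1 H2.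
apply: (@borel_ext (fun w => exists n, (fun n => if n is 0 then B1 else B2) n w)).
- apply: borel_cunion; by case.
- move=> w; split.
  + by case=> [[|n] H]; [left|right].
  + by case=> H; [exists O | exists 1%nat].
Qed.

Lemma borel_and B1 B2 : borel B1 -> borel B2 -> borel (fun w => B1 w /\ B2 w).
Proof.
move=> H1 H2.
apply: (@borel_ext (fun w => ~ (~ B1 w \/ ~ B2 w))).
- apply: borel_compl; apply: borel_or; exact: borel_compl.
- move=> w; tauto.
Qed.

Lemma borel_not B : borel B -> borel (fun w => ~ B w).
Proof. exact: borel_compl. Qed.

Lemma borel_inter (D : nat -> word A -> Prop) : (forall n, borel (D n)) -> borel (fun w => forall n, D n w).
Proof.
move=> H; apply: (@borel_ext (fun w => ~ exists n, (fun n w => ~ D n w) n w)).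
- apply: borel_compl; apply: borel_cunion => n; exact: borel_compl.
- move=> w; split.
  + move=> Hn n; apply: NNPP => Hd; apply: Hn; by exists n.
  + by move=> Hn [n Hd]; apply: Hd.
Qed.

Lemma borel_shift B : borel B -> borel (fun w => B (shift w)).
Proof.
elim=> [U HU|U _ IH|F _ IH].
- apply: borel_open => w Uw; case: (HU _ Uw) => n Hn; exists n.+1 => w' Hw'.
  apply: Hn => i Hi; apply: Hw'; lia.
- exact: borel_compl IH.
- exact: borel_cunion IH.
Qed.

Lemma borel_True : borel (fun _ : word A => True).
Proof. apply: (@borel_local 0) => //. Qed.

Lemma mu_ge0 B : borel B -> 0 <= mu B.
Proof. case: Hmu => H _; exact: H. Qed.

Lemma borel_False : borel (fun _ : word A => False).
Proof. apply: (@borel_local 0) => //. Qed.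

Lemma mu0 : mu (fun _ => False) = 0.
Proof.
case: Hmu => _ [_ [_ Hadd]].
have := Hadd (fun _ _ => False) (fun _ => borel_False).
have -> : mu (fun w => exists n : nat, (fun _ _ => False) n w) = mu (fun _ => False).
  apply: mu_ext => w; split => // [[]] //.
move=> H; set c := mu _ in H *.
apply: NNPP => Hc.
have Hc' : Rabs c > 0 by apply: Rabs_pos_lt.
case: (H (fun m n w (f : False) => match f with end) _ Hc') => N HN.
have := HN N.+1 (le_S _ _ (le_n N)).
rewrite sum_cte /Rdist.
have -> : c * INR N.+2 - c = c * INR N.+1 by rewrite [INR N.+2]S_INR; ring.
rewrite Rabs_mult (Rabs_pos_eq (INR _)); last exact: pos_INR.
have : 1 <= INR N.+1 by rewrite S_INR; have := pos_INR N; lra.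
nra.
Qed.

Lemma mu_add B1 B2 : borel B1 -> borel B2 -> (forall w, B1 w -> B2 w -> False) ->
  mu (fun w => B1 w \/ B2 w) = mu B1 + mu B2.
Proof.
move=> H1 H2 Hd.
case: Hmu => _ [_ [_ Hadd]].
pose F n := match n with O => B1 | 1%nat => B2 | _ => (fun _ : word A => False) end.
have HF : forall n, borel (F n) by case=> [|[|n]] //=; exact: borel_False.
have HFd : forall m n w, F m w -> F n w -> m = n.
  by case=> [|[|m]] [|[|n]] w //= Ha Hb; exfalso; apply: (Hd w).
have := Hadd F HF HFd.
have -> : mu (fun w => exists n, F n w) = mu (fun w => B1 w \/ B2 w).
  apply: mu_ext => w; split.
  - by case=> [[|[|n]]] //= H; [left|right].
  - by case=> H; [exists O | exists 1%nat].
move=> Hs; apply: (uniqueness_sum _ _ _ Hs) => eps Heps.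
have Hsum : forall n, sum_f_R0 (fun n => mu (F n)) n.+1 = mu B1 + mu B2.
  elim=> [//|n IH]; rewrite /= in IH *; rewrite IH mu0; ring.
exists 1%nat => n Hn; case: n Hn => [|n] Hn; first lia.
rewrite Hsum /Rdist; rewrite Rminus_diag Rabs_R0; lra.
Qed.

Lemma mu_sub_le B1 B2 : borel B1 -> borel B2 -> (forall w, B1 w -> B2 w) -> mu B1 <= mu B2.
Proof.
move=> H1 H2 Hs.
have -> : mu B2 = mu (fun w => B1 w \/ (B2 w /\ ~ B1 w)).
  apply: mu_ext => w; split; [move=> H; tauto | case=> [/Hs|[]] //].
rewrite mu_add //; last by move=> w ? [].
- have := mu_ge0 (borel_and H2 (borel_not H1)); lra.
- exact: borel_and H2 (borel_not H1).
Qed.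

Lemma mu_sum_le B1 B2 S : borel B1 -> borel B2 -> borel S -> (forall w, B1 w -> B2 w -> False) ->
  (forall w, B1 w -> S w) -> (forall w, B2 w -> S w) -> mu B1 + mu B2 <= mu S.
Proof.
move=> H1 H2 HS Hd Hs1 Hs2; rewrite -mu_add //.
apply: mu_sub_le => //; first exact: borel_or.
by move=> w [/Hs1|/Hs2].
Qed.

Lemma mu_le_sum B1 B2 S : borel B1 -> borel B2 -> borel S -> (forall w, B1 w -> B2 w -> False) ->
  (forall w, S w -> B1 w \/ B2 w) -> mu S <= mu B1 + mu B2.
Proof.
move=> H1 H2 HS Hd Hs; rewrite -mu_add //.
apply: mu_sub_le => //; exact: borel_or.
Qed.

Lemma mu_split B1 B2 S : borel B1 -> borel B2 -> (forall w, B1 w -> B2 w -> False) ->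
  (forall w, S w <-> B1 w \/ B2 w) -> mu S = mu B1 + mu B2.
Proof. move=> H1 H2 Hd Hs; rewrite -mu_add //; exact: mu_ext. Qed.

Lemma mu_True : mu (fun _ => True) = 1.
Proof. by case: Hmu => _ [H _]. Qed.

Lemma mu_le1 B : borel B -> mu B <= 1.
Proof. move=> H; rewrite -mu_True; apply: mu_sub_le => //; exact: borel_True. Qed.

Lemma mu_empty B : borel B -> 0 < mu B -> exists w, B w.
Proof.
move=> H Hp; apply: NNPP => Hn.
have : mu B = mu (fun _ => False) by apply: mu_ext => w; split => // Hw; apply: Hn; exists w.
rewrite mu0; lra.
Qed.

Lemma chain_le (D : nat -> word A -> Prop) : (forall n w, D n.+1 w -> D n w) ->
  forall m n w, (n <= m)%nat -> D m w -> D n w.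
Proof.
move=> Hd m n w; elim: m => [|m IH] Hnm Hm.
- have -> : n = O by lia. done.
- case: (Nat.eq_dec n m.+1) => [->//|Hne]; apply: IH; [lia | exact: Hd].
Qed.

Lemma cont_above (D : nat -> word A -> Prop) : (forall n, borel (D n)) ->
  (forall n w, D n.+1 w -> D n w) ->
  forall eps, 0 < eps -> exists n, mu (D n) < mu (fun w => forall n, D n w) + eps.
Proof.
move=> HD Hdec eps Heps.
set I := fun w => forall n, D n w.
have HI : borel I by exact: borel_inter.
pose G n := match n with O => I | S k => (fun w => D k w /\ ~ D k.+1 w) end.
have HG : forall n, borel (G n).
  case=> [//|k] /=; apply: borel_and => //; exact: borel_not.
have HGd : forall m n w, G m w -> G n w -> m = n.
  case=> [|m] [|n] w //=.
  - by move=> H [_ H']; exfalso; apply: H'.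
  - by move=> [_ H'] H; exfalso; apply: H'.
  - move=> [Hm Hm'] [Hn Hn'].
    case: (Nat.lt_total m n) => [Hmn|[->//|Hmn]]; exfalso.
    + apply: Hm'; apply: (chain_le Hdec) Hn; lia.
    + apply: Hn'; apply: (chain_le Hdec) Hm; lia.
case: Hmu => _ [_ [_ Hadd]].
have Hs := Hadd G HG HGd.
have Eu : mu (fun w => exists n, G n w) = mu (D O).
  apply: mu_ext => w; split.
  - case=> [[|n]] /= H; first exact: H.
    apply: (chain_le Hdec) (proj1 H); lia.
  - move=> H0; case: (classic (I w)) => HIw; first by exists O.
    have [n Hn] : exists n, ~ D n w by apply: NNPP => H; apply: HIw => n; apply: NNPP => H'; apply: H; exists n.
    case: (@ex_least (fun n => ~ D n w)); first by exists n.
    move=> [|k] [Hk Hmin]; first by exfalso.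
    exists k.+1 => /=; split => //; apply: NNPP; apply: Hmin; lia.
rewrite Eu in Hs.
have Hpart : forall n, sum_f_R0 (fun n => mu (G n)) n = mu I + mu (D O) - mu (D n).
  elim=> [/=|n IH]; first ring.
  rewrite /= IH.
  have E := @mu_split (D n.+1) (fun w => D n w /\ ~ D n.+1 w) (D n) (HD _) (HG n.+1).
  rewrite E; [ring | by move=> w ? [] | ].
  move=> w; split; [move=> H; case: (classic (D n.+1 w)); tauto | case=> [/Hdec|[]] //].
case: (Hs eps Heps) => N HN; exists N.
have := HN N (le_n N); rewrite Hpart /Rdist.
move=> /Rabs_def2 H; lra.
Qed.
End Meas.

Unset Implicit Arguments.
Section Main.
Variables (d : Order.disp_t) (A : finOrderType d).
Variable L : word A -> Prop.
Variable mu : (word A -> Prop) -> R.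
Hypothesis HL : is_shift L.
Hypothesis Hmu : is_prob_measure_on L mu.
Hypothesis Hinv : sigma_invariant mu.
Hypothesis Hnat : nonatomic mu.
Hypothesis Hpos : positive_on_cylinders L mu.
Implicit Types u v w z : word A.

Notation phim := (phi_mu L mu).

Lemma L_closed : is_closed L. Proof. by case: HL. Qed.
Lemma L_shift w : L w -> L (shift w). Proof. case: HL => _; exact. Qed.
Lemma borel_L : borel L. Proof. exact: borel_closed L_closed. Qed.
Lemma borel_Lle w : borel (fun u => L u /\ lex_le u w).
Proof. apply: borel_and; [exact: borel_L | exact: borel_closed (@closed_le _ _ w)]. Qed.
Lemma borel_Liv u v : borel (fun z => L z /\ lex_lt u z /\ lex_le z v).
Proof.
apply: borel_and; first exact: borel_L.
apply: borel_and; [exact: borel_open (@open_gt _ _ u) | exact: borel_closed (@closed_le _ _ v)].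
Qed.
Lemma borel_Lloc n S : local n S -> borel (fun z => L z /\ S z).
Proof. move=> H; apply: borel_and; [exact: borel_L | exact: borel_local H]. Qed.

Lemma phi_ge0 w : 0 <= phim w. Proof. exact (mu_ge0 Hmu (borel_Lle w)). Qed.
Lemma phi_le1 w : phim w <= 1. Proof. exact (mu_le1 Hmu (borel_Lle w)). Qed.

Lemma phi_diff u v : lex_le u v ->
  phim v = phim u + mu (fun z => L z /\ lex_lt u z /\ lex_le z v).
Proof.
move=> Huv; rewrite /phi_mu; apply: (mu_split Hmu (borel_Lle u) (borel_Liv u v)).
- move=> z [_ H1] [_ [H2 _]]; exact: lex_lt_nle H2 H1.
- move=> z; split.
  + move=> [Lz Hz]; case: (lex_le_or z u) => H; [by left | right; split => //].
  + case=> [[Lz Hz] | [Lz [_ Hz]]]; split => //; exact: lex_le_trans Hz Huv.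
Qed.

Lemma phi_mono u v : lex_le u v -> phim u <= phim v.
Proof. move=> H; rewrite (phi_diff _ _ H); have := mu_ge0 Hmu (borel_Liv u v); lra. Qed.

Lemma agree_succ n v w : agree n.+1 v w <-> agree n v w /\ v n = w n.
Proof.
split.
- move=> H; split; [apply: agree_le H; lia | apply: H; lia].
- move=> [H1 H2] i Hi; case: (ltngtP i n) => Hin; [exact: H1 | lia | by rewrite Hin].
Qed.

Lemma mkseq_agree n v w : mkseq v n = mkseq w n <-> agree n v w.
Proof.
split.
- move=> E i Hi; have := congr1 (fun s => nth (v 0%nat) s i) E.
  by rewrite !nth_mkseq.
- move=> H; rewrite /mkseq; apply/eq_in_map => i; rewrite mem_iota => /andP [_ Hi].
  apply: H; lia.
Qed.

Lemma Cyl_agree n v z : Cyl L (mkseq v n) z <-> L z /\ agree n z v.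
Proof. rewrite /Cyl size_mkseq; split => [[H1 H2]|[H1 H2]]; split => //; by apply/mkseq_agree. Qed.

Lemma local_agree n v : local n (fun z => agree n z v).
Proof. move=> z z' H1 H2; apply: agree_trans _ H2; exact: agree_sym. Qed.

Lemma cyl_pos n v : L v -> 0 < mu (fun z => L z /\ agree n z v).
Proof.
move=> Lv; have := Hpos (mkseq v n).
rewrite (@mu_ext _ _ mu _ (fun z => L z /\ agree n z v)); last exact: Cyl_agree.
apply; exists v; apply/Cyl_agree; split => //.
Qed.

Lemma lt_nagree (p q : word A) : lex_lt p q -> exists j, forall m, (j < m)%nat -> ~ agree m p q.
Proof.
case=> j [_ Hj]; exists j => m Hm Ha; have := Ha j ltac:(lia).
by move=> E; move: Hj; rewrite E ltxx.
Qed.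

Lemma strict3 u v z : L v -> lex_lt u v -> lex_lt v z -> phim u < phim z.
Proof.
move=> Lv Huv Hvz.
case: (lt_nagree _ _ Huv) => j1 Hj1; case: (lt_nagree _ _ Hvz) => j2 Hj2.
set n := (S (Nat.max j1 j2)).
have Hsub : forall z', L z' /\ agree n z' v -> L z' /\ lex_lt u z' /\ lex_le z' z.
  move=> z' [Lz' Ha]; split => //; split.
  - have Hn1 : ~ agree n u v by apply: Hj1; lia.
    have [H _] := @lt_prefix _ _ n u v u z' Huv Hn1 (@agree_refl _ _ n u) (agree_sym Ha).
    exact: H.
  - have Hn2 : ~ agree n v z by apply: Hj2; lia.
    have [H _] := @lt_prefix _ _ n v z z' z Hvz Hn2 (agree_sym Ha) (@agree_refl _ _ n z).
    by right.
rewrite (phi_diff _ _ (lex_lt_le (lex_trans Huv Hvz))).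
have := mu_sub_le Hmu (borel_Lloc _ _ (local_agree n v)) (borel_Liv u z) Hsub.
have := cyl_pos n _ Lv; lra.
Qed.

Definition upper w := L w /\ forall v, L v -> lex_lt w v -> phim w < phim v.

Lemma upper_lower w : L w -> (upper w <-> ~ is_lower L mu w).
Proof.
move=> Lw; split.
- move=> [_ Hup] [w' [Lw' [Hlt Hf]]].
  have [_ E] := proj2 (Hf w') (or_intror erefl).
  have := Hup w' Lw' Hlt; lra.
- move=> Hnl; split => // v Lv Hwv.
  apply: NNPP => Hn.
  have Ev : phim v = phim w by have := phi_mono _ _ (lex_lt_le Hwv); lra.
  apply: Hnl; exists v; split => //; split => // u; split.
  + move=> [Lu Eu]; apply: NNPP => Hu.
    have Huw : u <> w by tauto. have Huv : u <> v by tauto.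
    case: (lex_total Huw) => H1.
    * have := strict3 _ _ _ Lw H1 Hwv; lra.
    * case: (lex_total Huv) => H2.
      -- have := strict3 _ _ _ Lu H1 H2; lra.
      -- have := strict3 _ _ _ Lv Hwv H2; lra.
  + by case=> ->; split.
Qed.

Lemma phi_iota w (x : R) : L w -> (phi L mu w = Defs.iota x <-> phim w = x /\ upper w).
Proof.
move=> Lw; rewrite (upper_lower _ Lw) /phi /Defs.iota.
case: excluded_middle_informative => Hl; split.
- by case.
- by case.
- by case=> ->.
- by case=> -> _.
Qed.

Lemma upper_uniq w w' : upper w -> upper w' -> phim w = phim w' -> w = w'.
Proof.
move=> [Lw Hw] [Lw' Hw'] E; apply: NNPP => Ne; case: (lex_total Ne) => H.
- have := Hw w' Lw' H; lra.
- have := Hw' w Lw H; lra.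
Qed.


Definition Bn u n := fun v => L v /\ lex_lt v u /\ ~ agree n v u.
Definition Cn u n := fun v => L v /\ agree n v u.

Lemma local_Bn u n : local n (fun v => lex_lt v u /\ ~ agree n v u).
Proof.
move=> v v' Hv [Hlt Hna].
have [H1 H2] := @lt_prefix _ _ n v u v' u Hlt Hna Hv (@agree_refl _ _ n u).
by split.
Qed.

Lemma borel_Bn u n : borel (Bn u n).
Proof. exact: (borel_Lloc _ _ (local_Bn u n)). Qed.
Lemma borel_Cn u n : borel (Cn u n).
Proof. exact: (borel_Lloc _ _ (local_agree n u)). Qed.

Lemma Bn_resp u u' n v : agree n u u' -> Bn u n v -> Bn u' n v.
Proof.
move=> Ha [Lv [Hlt Hna]].
have [H1 H2] := @lt_prefix _ _ n v u v u' Hlt Hna (@agree_refl _ _ n v) Ha.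
by split.
Qed.
Lemma Cn_resp u u' n v : agree n u u' -> Cn u n v -> Cn u' n v.
Proof. move=> Ha [Lv H]; split => //; exact: agree_trans H Ha. Qed.

Lemma Ln_ex : exists w, L w.
Proof.
apply: NNPP => H.
case: Hmu => _ [H1 [H2 _]].
have : mu (fun w => ~ L w) = mu (fun _ => True).
  apply: mu_ext => w; split => // _ Lw; apply: H; by exists w.
lra.
Qed.

Lemma phi_surj x : 0 <= x < 1 -> exists w, L w /\ phim w = x.
Proof.
move=> Hx.
case: Ln_ex => w0 Lw0.
pose Q u n := mu (Bn u n) <= x < mu (Bn u n) + mu (Cn u n).
have HB0 : forall u, mu (Bn u 0) = 0.
  move=> u; rewrite -(mu0 Hmu); apply: mu_ext => v; split => //.
  by move=> [_ [_ H]]; apply: H => i; lia.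
have HC0 : forall u, mu (Cn u 0) = 1.
  move=> u; rewrite -(mu_True Hmu).
  rewrite (mu_split Hmu (B1 := Cn u 0) (B2 := fun v => ~ L v) (S := fun _ => True)).
  - case: Hmu => _ [_ [-> _]]; ring.
  - exact: borel_Cn.
  - exact: borel_not borel_L.
  - by move=> v [].
  - move=> v; split => // _; case: (classic (L v)) => H; [left; split => // i; lia | by right].
have Hresp : forall u u' n, agree n u u' -> Q u n -> Q u' n.
  move=> u u' n Ha; rewrite /Q.
  have -> : mu (Bn u n) = mu (Bn u' n).
    apply: mu_ext => v; split; [exact: Bn_resp | apply: Bn_resp; exact: agree_sym].
  have -> : mu (Cn u n) = mu (Cn u' n).
    apply: mu_ext => v; split; [exact: Cn_resp | apply: Cn_resp; exact: agree_sym].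
  done.
have Hstep : forall u n, Q u n -> exists u', agree n u u' /\ Q u' n.+1.
  move=> u n [Hlo Hhi].
  pose ub (b : A) := fun i : nat => if (i < n)%nat then u i else b.
  have Hub : forall b, agree n u (ub b) by move=> b i Hi; rewrite /ub Hi.
  have Hubn : forall b, ub b n = b by move=> b; rewrite /ub ltnn.
  pose Cl (b : A) := fun v => Cn u n v /\ (v n < b)%O.
  have HCl : forall b, borel (Cl b).
    move=> b; apply: borel_and; first exact: borel_Cn.
    apply: (borel_local (n := n.+1)) => v v' Hv H; by rewrite -(Hv n (ltnSn n)).
  have HBub : forall b, mu (Bn (ub b) n.+1) = mu (Bn u n) + mu (Cl b).
    move=> b; apply: (mu_split Hmu (borel_Bn u n) (HCl b)).
    - by move=> v [_ [_ H1]] [[_ H2] _].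
    - move=> v; split.
      + move=> [Lv [Hlt Hna]].
        case: (classic (agree n v u)) => Ha.
        * right; split; first by split.
          case: Hlt => j [Hj1 Hj2].
          case: (ltngtP j n) => Hjn.
          -- exfalso; move: Hj2; by rewrite (agree_trans Ha (Hub b) Hjn) ltxx.
          -- exfalso; apply: Hna; apply: agree_le Hj1; lia.
          -- by move: Hj2; rewrite Hjn Hubn.
        * left; split => //.
          have Hna' : ~ agree n v (ub b) by move=> H; apply: Ha; apply: agree_trans H (agree_sym (Hub b)).
          have [H1 H2] := @lt_prefix _ _ n v (ub b) v u Hlt Hna' (@agree_refl _ _ n v) (agree_sym (Hub b)).
          by split.
      + case=> [[Lv [Hlt Hna]]|[[Lv Ha] Hlt]].
        * have [H1 H2] := @lt_prefix _ _ n v u v (ub b) Hlt Hna (@agree_refl _ _ n v) (Hub b).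
          split => //; split => // H; apply: H2; apply: agree_le H; lia.
        * split => //; split.
          -- exists n; split; [exact: agree_trans Ha (Hub b) | by rewrite Hubn].
          -- move=> H; move: Hlt; rewrite (H n (ltnSn n)) Hubn ltxx //.
  have HCub : forall b v, Cn (ub b) n.+1 v <-> Cn u n v /\ v n = b.
    move=> b v; rewrite /Cn agree_succ Hubn; split.
    - move=> [Lv [Ha E]]; split => //; split => //; apply: agree_trans Ha (agree_sym (Hub b)).
    - move=> [[Lv Ha] E]; split => //; split => //; exact: agree_trans Ha (Hub b).
  pose P (b : A) := mu (Bn u n) + mu (Cl b) <= x.
  have [m0 [_ Hm0]] := @ex_min_letter _ A (fun _ => True) (ex_intro _ (u n) I).
  have Pm0 : P m0.
    rewrite /P.
    have -> : mu (Cl m0) = 0.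
      rewrite -(mu0 Hmu); apply: mu_ext => v; split => // [[_ H]].
      have := Hm0 (v n) I; by rewrite leNgt H.
    lra.
  have [bs [Pbs Hbs]] := @ex_max_letter _ A P (ex_intro _ m0 Pm0).
  exists (ub bs); split; first exact: Hub.
  rewrite /Q HBub; split; first exact: Pbs.
  have -> : mu (Cn (ub bs) n.+1) = mu (fun v => Cn u n v /\ v n = bs).
    apply: mu_ext => v; exact: HCub.
  have HCeq : borel (fun v => Cn u n v /\ v n = bs).
    apply: borel_and; first exact: borel_Cn.
    apply: (borel_local (n := n.+1)) => v v' Hv H; by rewrite -(Hv n (ltnSn n)).
  have Hsum : mu (Cl bs) + mu (fun v => Cn u n v /\ v n = bs) = mu (fun v => Cn u n v /\ (v n <= bs)%O).
    symmetry; apply: (mu_split Hmu (HCl bs) HCeq).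
    - by move=> v [_ H1] [_ H2]; move: H1; rewrite H2 ltxx.
    - move=> v; split.
      + move=> [Hc Hle]; move: Hle; rewrite le_eqVlt => /orP [/eqP E|H]; [right|left]; by split.
      + case=> [[Hc H]|[Hc H]]; split => //; [exact: ltW | by rewrite H].
  case: (classic (exists c, (bs < c)%O)) => [Hc|Hc].
  + have [c' [Hc' Hc'min]] := @ex_min_letter _ A (fun c => (bs < c)%O) Hc.
    have NPc' : ~ P c' by move=> H; have := Hbs c' H; rewrite leNgt Hc'.
    have Eq : mu (Cl c') = mu (fun v => Cn u n v /\ (v n <= bs)%O).
      apply: mu_ext => v; split.
      * move=> [Hcn Hlt]; split => //; rewrite leNgt; apply/negP => H.
        have := Hc'min (v n) H; by rewrite leNgt Hlt.
      * move=> [Hcn Hle]; split => //; exact: le_lt_trans Hle Hc'.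
    rewrite /P Eq in NPc'; lra.
  + have Eq : mu (fun v => Cn u n v /\ (v n <= bs)%O) = mu (Cn u n).
      apply: mu_ext => v; split; first by case.
      move=> H; split => //; rewrite leNgt; apply/negP => H'; apply: Hc; by exists (v n).
    lra.
have [w Hw] := @greedy _ A Q w0 ltac:(rewrite /Q HB0 HC0; lra) Hstep Hresp.
have Lw : L w.
  apply: NNPP => Nw; case: (L_closed _ Nw) => n Hn.
  have [Hlo Hhi] := Hw n.
  have [z [Lz Hz]] := mu_empty Hmu (borel_Cn w n) ltac:(lra).
  apply: (Hn z) => //; exact: agree_sym.
exists w; split => //.
have Hb : forall n, mu (Bn w n) <= phim w <= mu (Bn w n) + mu (Cn w n).
  move=> n; split.
  - apply: (mu_sub_le Hmu (borel_Bn w n) (borel_Lle w)) => v [Lv [Hlt _]]; split => //; by right.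
  - apply: (mu_le_sum Hmu (borel_Bn w n) (borel_Cn w n) (borel_Lle w)).
    + by move=> v [_ [_ H1]] [_ H2].
    + move=> v [Lv Hle]; case: (classic (agree n v w)) => Ha; [right | left] => //.
      split => //; split => //; case: Hle => // E; subst v; exfalso; exact: Ha.
have Hdec : forall n v, Cn w n.+1 v -> Cn w n v.
  move=> n v [Lv Ha]; split => //; apply: agree_le Ha; lia.
have HI : mu (fun v => forall n, Cn w n v) = 0.
  apply: Rle_antisym.
  - rewrite -(Hnat w); apply: (mu_sub_le Hmu (borel_inter (fun n => borel_Cn w n)) (borel_closed (@closed_eq _ _ w))).
    move=> v H; apply: agree_all => n; exact: (proj2 (H n)).
  - exact (mu_ge0 Hmu (borel_inter (fun n => borel_Cn w n))).
apply: NNPP => Hne.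
have Heps : 0 < Rabs (phim w - x) by apply: Rabs_pos_lt; lra.
have [n Hn] := cont_above Hmu (fun n => borel_Cn w n) Hdec Heps.
rewrite HI in Hn.
have [Hlo Hhi] := Hw n. have [Hb1 Hb2] := Hb n.
move: Hn; rewrite Rplus_0_l; apply: Rle_not_lt.
apply: Rabs_le; lra.
Qed.


Lemma ex_upper x : 0 <= x < 1 -> exists w, upper w /\ phim w = x.
Proof.
move=> Hx; have [w [Lw Ew]] := phi_surj x Hx.
case: (classic (upper w)) => Hu; first by exists w.
have [v [Lv [Hwv Hn]]] : exists v, L v /\ lex_lt w v /\ ~ phim w < phim v.
  apply: NNPP => H; apply: Hu; split => // v Lv Hwv; apply: NNPP => H'; apply: H; by exists v.
have Ev : phim v = phim w by have := phi_mono _ _ (lex_lt_le Hwv); lra.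
exists v; split; last by rewrite Ev.
split => // v' Lv' Hvv'; apply: NNPP => H'.
have := strict3 _ _ _ Lv Hwv Hvv'; have := phi_mono _ _ (lex_lt_le Hvv'); lra.
Qed.

Lemma mu_L : mu L = 1.
Proof.
rewrite -(mu_True Hmu) (mu_split Hmu (B1 := L) (B2 := fun v => ~ L v) (S := fun _ => True)).
- case: Hmu => _ [_ [-> _]]; ring.
- exact: borel_L.
- exact: borel_not borel_L.
- by move=> v.
- move=> v; split => // _; exact: classic.
Qed.

Lemma borel_E w k : borel (fun v => L v /\ lex_lt w v /\ agree k v w).
Proof.
apply: borel_and; first exact: borel_L.
apply: borel_and; [exact: borel_open (@open_gt _ _ w) | exact: borel_local (local_agree k w)].
Qed.

Lemma gap w k : upper w -> phim w < 1 -> 0 < mu (fun v => L v /\ lex_lt w v /\ agree k v w).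
Proof.
move=> [Lw Hup] Hw1.
pose E := fun v => L v /\ lex_lt w v /\ agree k v w.
have HE : borel E := borel_E w k.
apply: NNPP => HnE.
have HE0 : mu E <= 0 by rewrite /E; lra.
case: (classic (exists v, E v)) => [[v [Lv [Hwv Ha]]]|Hno].
- have := Hup v Lv Hwv.
  rewrite (phi_diff _ _ (lex_lt_le Hwv)).
  have Hs : forall z, L z /\ lex_lt w z /\ lex_le z v -> E z.
    move=> z [Lz [Hwz Hzv]]; split => //; split => //.
    apply: agree_sym; apply: lex_convex (agree_sym Ha) (lex_lt_le Hwz) Hzv.
  have := mu_sub_le Hmu (borel_Liv w v) HE Hs; lra.
- set G := fun v => L v /\ (lex_lt w v /\ ~ agree k v w).
  have HGc : is_closed G.
    apply: closed_and; first exact: L_closed.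
    apply: (local_closed (n := k)) => v v' Hv [Hlt Hna].
    have Hna' : ~ agree k w v by move=> H; apply: Hna; exact: agree_sym.
    have [H1 H2] := @lt_prefix _ _ k w v w v' Hlt Hna' (@agree_refl _ _ k w) Hv.
    split => // H; apply: H2; exact: agree_sym.
  have Hgt : 0 < mu (fun v => L v /\ lex_lt w v).
    have : mu L = phim w + mu (fun v => L v /\ lex_lt w v).
      apply: (mu_split Hmu (borel_Lle w)).
      + apply: borel_and; [exact: borel_L | exact: borel_open (@open_gt _ _ w)].
      + by move=> v [_ H1] [_ H2]; exact: lex_lt_nle H2 H1.
      + move=> v; split; last by case=> [[]|[]].
        move=> Lv; case: (lex_le_or v w) => H; [left|right]; by split.
    rewrite mu_L; lra.
  have [v0 [Lv0 Hv0]] := mu_empty Hmu (borel_and borel_L (borel_open (@open_gt _ _ w))) Hgt.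
  have HG0 : G v0.
    split => //; split => // Ha; apply: Hno; exists v0; by split.
  have [m [Gm Hm]] := ex_lex_min HGc (ex_intro _ v0 HG0).
  have [Lm [Hwm _]] := Gm.
  have := Hup m Lm Hwm.
  rewrite (phi_diff _ _ (lex_lt_le Hwm)).
  have : mu (fun z => L z /\ lex_lt w z /\ lex_le z m) <= 0.
    rewrite -(Hnat m); apply: (mu_sub_le Hmu (borel_Liv w m) (borel_closed (@closed_eq _ _ m))).
    move=> z [Lz [Hwz Hzm]].
    have Gz : G z by split => //; split => // Ha; apply: Hno; exists z; by split.
    exact: lex_le_antisym Hzm (Hm z Gz).
  lra.
Qed.

Lemma T_L_eq x w : upper w -> phim w = x -> T_L L mu x = phim (shift w).
Proof.
move=> Hu Ew; rewrite /T_L.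
set P := fun y => _.
have HP : exists y, P y.
  exists (phim (shift w)); exists w; split; first by case: Hu.
  split => //; apply/phi_iota; [by case: Hu | by split].
have [w' [Lw' [Hphi Hk]]] := epsilon_spec (inhabits 0) P HP.
rewrite -Hk /kappa /phi /=.
have [E' Hu'] := proj1 (phi_iota w' x Lw') Hphi.
by rewrite (upper_uniq _ _ Hu' Hu ltac:(by rewrite E' Ew)).
Qed.


Definition lA (a : A) := mu (fun v => L v /\ (v 0%nat < a)%O).
Definition rA (a : A) := mu (fun v => L v /\ (v 0%nat <= a)%O).

Lemma borel_first (P : A -> Prop) : borel (fun v => L v /\ P (v 0%nat)).
Proof.
apply: (borel_Lloc 1%nat) => v v' Hv H; by rewrite -(Hv 0%nat ltac:(done)).
Qed.

Lemma Eset_first w v : L v /\ lex_lt w v /\ agree 1 v w -> v 0%nat = w 0%nat.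
Proof. move=> [_ [_ H]]; exact: H. Qed.

Lemma upper_first w a : upper w -> phim w < 1 -> w 0%nat = a -> lA a <= phim w < rA a.
Proof.
move=> Hu Hw1 Ea; have Lw := proj1 Hu; split.
- apply: (mu_sub_le Hmu (borel_first (fun b => (b < a)%O)) (borel_Lle w)) => v [Lv Hv]; split => //.
  right; apply: lex_lt0; by rewrite Ea.
- have Hg := gap w 1 Hu Hw1.
  have := mu_sum_le Hmu (borel_Lle w) (borel_E w 1) (borel_first (fun b => (b <= a)%O)).
  have H1 : forall v, L v /\ lex_le v w -> L v /\ lex_lt w v /\ agree 1 v w -> False.
    by move=> v [_ H1] [_ [H2 _]]; exact: lex_lt_nle H2 H1.
  have H2 : forall v, L v /\ lex_le v w -> L v /\ (v 0%nat <= a)%O.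
    move=> v [Lv Hv]; split => //; rewrite -Ea; exact: lex_le0.
  have H3 : forall v, L v /\ lex_lt w v /\ agree 1 v w -> L v /\ (v 0%nat <= a)%O.
    move=> v Hv; split; first by case: Hv.
    by rewrite (Eset_first _ _ Hv) Ea.
  move=> /(_ H1 H2 H3); rewrite /rA /phi_mu; lra.
Qed.

Lemma first_of_interval w a : upper w -> phim w < 1 -> lA a <= phim w < rA a -> w 0%nat = a.
Proof.
move=> Hu Hw1 [Hl Hr]; have Lw := proj1 Hu.
case: (ltgtP (w 0%nat) a) => // Hwa; exfalso.
- have Hg := gap w 1 Hu Hw1.
  have := mu_sum_le Hmu (borel_Lle w) (borel_E w 1) (borel_first (fun b => (b < a)%O)).
  have H1 : forall v, L v /\ lex_le v w -> L v /\ lex_lt w v /\ agree 1 v w -> False.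
    by move=> v [_ H1] [_ [H2 _]]; exact: lex_lt_nle H2 H1.
  have H2 : forall v, L v /\ lex_le v w -> L v /\ (v 0%nat < a)%O.
    move=> v [Lv Hv]; split => //; exact: le_lt_trans (lex_le0 Hv) Hwa.
  have H3 : forall v, L v /\ lex_lt w v /\ agree 1 v w -> L v /\ (v 0%nat < a)%O.
    move=> v Hv; split; first by case: Hv.
    by rewrite (Eset_first _ _ Hv).
  move=> /(_ H1 H2 H3); rewrite /lA /phi_mu in Hl *; lra.
- have : rA a <= phim w.
    apply: (mu_sub_le Hmu (borel_first (fun b => (b <= a)%O)) (borel_Lle w)) => v [Lv Hv]; split => //.
    right; apply: lex_lt0; exact: le_lt_trans Hv Hwa.
  lra.
Qed.

Lemma lA_lt_rA a v : L v -> v 0%nat = a -> lA a < rA a.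
Proof.
move=> Lv Ev.
have := cyl_pos 1 v Lv.
have := mu_sum_le Hmu (borel_first (fun b => (b < a)%O)) (borel_Lloc _ _ (local_agree 1 v)) (borel_first (fun b => (b <= a)%O)).
have H1 : forall z, L z /\ (z 0%nat < a)%O -> L z /\ agree 1 z v -> False.
  move=> z [_ H1] [_ H2]; move: H1; rewrite (H2 0%nat ltac:(done)) Ev ltxx //.
have H2 : forall z, L z /\ (z 0%nat < a)%O -> L z /\ (z 0%nat <= a)%O.
  by move=> z [? H]; split => //; exact: ltW.
have H3 : forall z, L z /\ agree 1 z v -> L z /\ (z 0%nat <= a)%O.
  by move=> z [? H]; split => //; rewrite (H 0%nat ltac:(done)) Ev.
move=> /(_ H1 H2 H3); rewrite /lA /rA; lra.
Qed.

Lemma lA_ge0 a : 0 <= lA a. Proof. exact (mu_ge0 Hmu (borel_first (fun b => (b < a)%O))). Qed.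
Lemma rA_le1 a : rA a <= 1. Proof. exact (mu_le1 Hmu (borel_first (fun b => (b <= a)%O))). Qed.


Lemma upper_lt wx wy : upper wx -> upper wy -> phim wx < phim wy -> lex_lt wx wy.
Proof.
move=> Hx Hy Hlt; case: (lex_le_or wy wx) => // H.
have := phi_mono _ _ H; lra.
Qed.

Lemma T_incr wx wy : upper wx -> upper wy -> wx 0%nat = wy 0%nat -> phim wx < phim wy ->
  phim (shift wx) < phim (shift wy).
Proof.
move=> Hx Hy E0 Hlt.
have Hl := upper_lt _ _ Hx Hy Hlt.
rewrite (phi_diff _ _ (lex_le_shift E0 (lex_lt_le Hl))).
have Hb := borel_Liv (shift wx) (shift wy).
rewrite -(Hinv _ Hb).
have Hsub : forall z, L z /\ lex_lt wx z /\ lex_le z wy ->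
   (fun z => L z /\ lex_lt (shift wx) z /\ lex_le z (shift wy)) (shift z).
  move=> z [Lz [H1 H2]] /=.
  have Ha1 : agree 1 wx wy.
  { move=> i Hi; have -> : i = 0%nat by lia. exact: E0. }
  have Ha := lex_convex Ha1 (lex_lt_le H1) H2.
  have Ez : wx 0%nat = z 0%nat by apply: Ha.
  split; first exact: L_shift.
  split; first exact: lex_lt_shift.
  apply: lex_le_shift => //; by rewrite -Ez.
have := mu_sub_le Hmu (borel_Liv wx wy) (borel_shift Hb) Hsub.
rewrite (phi_diff _ _ (lex_lt_le Hl)) in Hlt; lra.
Qed.

Lemma T_rcont wx : upper wx -> phim wx < 1 -> forall eps, 0 < eps ->
  exists delta, 0 < delta /\ forall wy, upper wy -> phim wx < phim wy < phim wx + delta ->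
    Rabs (phim (shift wy) - phim (shift wx)) < eps.
Proof.
move=> Hx Hx1 eps Heps.
set sw := shift wx.
pose D n := fun v => L v /\ lex_lt sw v /\ agree n v sw.
have HD : forall n, borel (D n) by move=> n; exact: borel_E.
have Hdec : forall n v, D n.+1 v -> D n v.
  move=> n v [Lv [H1 H2]]; split => //; split => //; apply: agree_le H2; lia.
have HI : mu (fun v => forall n, D n v) = 0.
  rewrite -(mu0 Hmu); apply: mu_ext => v; split => // H.
  have E : v = sw by apply: agree_all => n; exact: (proj2 (proj2 (H n))).
  have := proj1 (proj2 (H 0%nat)); rewrite E; exact: lex_irrefl.
have [n Hn] := cont_above Hmu HD Hdec Heps.
rewrite HI Rplus_0_l in Hn.
exists (mu (fun v => L v /\ lex_lt wx v /\ agree n.+1 v wx)); split; first exact: gap.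
move=> wy Hy [Hlt Hlt'].
have Hl := upper_lt _ _ Hx Hy Hlt.
have Hag : agree n.+1 wy wx.
  apply: NNPP => Hna.
  have : phim wx + mu (fun v => L v /\ lex_lt wx v /\ agree n.+1 v wx) <= phim wy.
    apply: (mu_sum_le Hmu (borel_Lle wx) (borel_E wx n.+1) (borel_Lle wy)).
    - by move=> v [_ H1] [_ [H2 _]]; exact: lex_lt_nle H2 H1.
    - move=> v [Lv Hv]; split => //; exact: lex_le_trans Hv (lex_lt_le Hl).
    - move=> v [Lv [Hv Ha]]; split => //; right.
      have Hna' : ~ agree n.+1 wx wy by move=> H; apply: Hna; exact: agree_sym.
      have [H1 _] := @lt_prefix _ _ n.+1 wx wy v wy Hl Hna' (agree_sym Ha) (@agree_refl _ _ _ wy).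
      exact: H1.
  lra.
have E0 : wx 0%nat = wy 0%nat by apply: esym; apply: Hag.
have Hsl : lex_lt sw (shift wy) by exact: lex_lt_shift E0 Hl.
have Hsa : agree n sw (shift wy) by apply: agree_shift; exact: agree_sym.
rewrite (phi_diff _ _ (lex_lt_le Hsl)).
have Hsub : forall z, L z /\ lex_lt sw z /\ lex_le z (shift wy) -> D n z.
  move=> z [Lz [H1 H2]]; split => //; split => //.
  apply: agree_sym; exact: lex_convex Hsa (lex_lt_le H1) H2.
have := mu_sub_le Hmu (borel_Liv sw (shift wy)) (HD n) Hsub.
have := mu_ge0 Hmu (borel_Liv sw (shift wy)).
move=> H1 H2; rewrite Rabs_pos_eq; lra.
Qed.


Lemma Cyl1 (a : A) w : Cyl L [:: a] w <-> L w /\ w 0%nat = a.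
Proof. rewrite /Cyl /mkseq /=; split; case=> H E; split => //; [by case: E | by rewrite E]. Qed.

Lemma I_La_iff (a : A) (x : R) : I_La L mu a x <-> 0 <= x < 1 /\ exists w, upper w /\ phim w = x /\ w 0%nat = a.
Proof.
split.
- move=> [Hx [w [Lw [Hphi HC]]]]; split => //.
  have [E Hu] := proj1 (phi_iota w x Lw) Hphi.
  exists w; split => //; split => //; exact: (proj2 (proj1 (Cyl1 a w) HC)).
- move=> [Hx [w [Hu [E Ea]]]]; split => //.
  exists w; split; first exact: (proj1 Hu).
  split; first by apply/(phi_iota w x (proj1 Hu)).
  by apply/Cyl1; split => //; exact: (proj1 Hu).
Qed.

Lemma main_sec :
  (forall x, 0 <= x < 1 ->
     exists a, I_La L mu a x /\ forall b, I_La L mu b x -> b = a) /\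
  (forall a, (exists x, I_La L mu a x) ->
     exists l r, l < r /\ forall x, I_La L mu a x <-> l <= x < r) /\
  (forall x, 0 <= x < 1 -> forall eps, 0 < eps ->
     exists delta, 0 < delta /\
       forall y, 0 <= y < 1 -> x <= y < x + delta ->
         Rabs (T_L L mu y - T_L L mu x) < eps) /\
  (forall a x y, I_La L mu a x -> I_La L mu a y -> x < y ->
     T_L L mu x < T_L L mu y).
Proof.
split; [|split; [|split]].
- move=> x Hx; have [w [Hu E]] := ex_upper x Hx.
  exists (w 0%nat); split; first by apply/I_La_iff; split => //; exists w.
  move=> b /I_La_iff [_ [w' [Hu' [E' Eb]]]].
  by rewrite -Eb (upper_uniq _ _ Hu' Hu ltac:(by rewrite E E')).
- move=> a [x0 /I_La_iff [Hx0 [v [Hv [_ Ev]]]]].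
  exists (lA a), (rA a); split; first exact: (lA_lt_rA a v (proj1 Hv) Ev).
  move=> x; split.
  + move=> /I_La_iff [Hx [w [Hw [E Ea]]]].
    rewrite -E; apply: upper_first => //; lra.
  + move=> Hx.
    have Hx' : 0 <= x < 1 by have := lA_ge0 a; have := rA_le1 a; lra.
    have [w [Hu E]] := ex_upper x Hx'.
    apply/I_La_iff; split => //; exists w; split => //; split => //.
    apply: first_of_interval => //; [lra | by rewrite E].
- move=> x Hx eps Heps.
  have [wx [Hux Ex]] := ex_upper x Hx.
  have [delta [Hd Hc]] := T_rcont wx Hux ltac:(lra) eps Heps.
  exists delta; split => // y Hy [Hxy Hyd].
  case: (Req_dec x y) => [<-|Hne].
  + rewrite Rminus_diag Rabs_R0; lra.
  + have [wy [Huy Ey]] := ex_upper y Hy.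
    rewrite (T_L_eq y wy Huy Ey) (T_L_eq x wx Hux Ex).
    apply: Hc => //; lra.
- move=> a x y /I_La_iff [Hx [wx [Hux [Ex Eax]]]] /I_La_iff [Hy [wy [Huy [Ey Eay]]]] Hxy.
  rewrite (T_L_eq y wy Huy Ey) (T_L_eq x wx Hux Ex).
  apply: T_incr => //; [by rewrite Eax Eay | lra].
Qed.

End Main.



Theorem mainTheorem9 (d : Order.disp_t) (A : finOrderType d)
  (L : word A -> Prop) (mu : (word A -> Prop) -> R) :
  is_shift L ->
  is_prob_measure_on L mu ->
  sigma_invariant mu ->
  nonatomic mu ->
  regular mu ->
  positive_on_cylinders L mu ->
  (* I = [0,1) is the disjoint union of the I_{L,a} *)
  (forall x, 0 <= x < 1 ->
     exists a, I_La L mu a x /\ forall b, I_La L mu b x -> b = a) /\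
  (* each nonempty I_{L,a} is a right-open interval *)
  (forall a, (exists x, I_La L mu a x) ->
     exists l r, l < r /\ forall x, I_La L mu a x <-> l <= x < r) /\
  (* T_L is right-continuous on I *)
  (forall x, 0 <= x < 1 -> forall eps, 0 < eps ->
     exists delta, 0 < delta /\
       forall y, 0 <= y < 1 -> x <= y < x + delta ->
         Rabs (T_L L mu y - T_L L mu x) < eps) /\
  (* T_L is increasing on each I_{L,a} *)
  (forall a x y, I_La L mu a x -> I_La L mu a y -> x < y ->
     T_L L mu x < T_L L mu y).
Proof.
move=> HL Hmu Hinv Hnat _ Hpos.
exact (main_sec d A L mu HL Hmu Hinv Hnat Hpos).
Qed.
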